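(* Let $G$ be a graph. For every $A\subseteq V(G)$ let $\operatorname{mm}(A)$ denote the maximum cardinality of a matching in the bipartite graph $G[A,V(G)\setminus A]$. Then $\operatorname{mm}$ is submodular: for all $A,B\subseteq V(G)$, $$\operatorname{mm}(A)+\operatorname{mm}(B)\ \ge\ \operatorname{mm}(A\cup B)+\operatorname{mm}(A\cap B).$$
   Context: Graphs are finite, simple and undirected. For disjoint $A,B\subseteq V(G)$, $G[A,B]$ denotes the bipartite graph with vertex set $A\cup B$ and edge set $\{uv\in E(G): u\in A, v\in B\}$. *)

(* Defs.v *)
From mathcomp Require Import all_boot.
Set Implicit Arguments. Unset Strict Implicit. Unset Printing Implicit Defensive.

Definition simple_graph (T : finType) (e : rel T) : Prop :=
  symmetric e /\ irreflexive e.

(* An edge of the bipartite graph G[A, V \ A] is represented as the ordered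
   pair (u, v) with u \in A, v \notin A and e u v (each edge exactly once). *)
Definition cross_edge (T : finType) (e : rel T) (A : {set T}) (p : T * T) : bool :=
  [&& p.1 \in A, p.2 \notin A & e p.1 p.2].

Definition bip_matching (T : finType) (e : rel T) (A : {set T}) (M : {set T * T}) : bool :=
  [forall p in M, cross_edge e A p] &&
  [forall p in M, forall q in M,
     (p != q) ==> [&& p.1 != q.1, p.1 != q.2, p.2 != q.1 & p.2 != q.2]].

Definition mm (T : finType) (e : rel T) (A : {set T}) : nat :=
  \max_(M : {set T * T} | bip_matching e A M) #|M|.

(* Main.v *)
Require Import Defs.
From mathcomp Require Import all_boot.

Set Implicit Arguments. Unset Strict Implicit. Unset Printing Implicit Defensive.

Definition disj (T : eqType) (p q : T * T) : bool :=
  [&& p.1 != q.1, p.1 != q.2, p.2 != q.1 & p.2 != q.2].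

Lemma disjC (T : eqType) (p q : T * T) : disj p q -> disj q p.
Proof.
by case/and4P => a b c d; apply/and4P; split; rewrite eq_sym.
Qed.

Lemma bm_cross (T : finType) (e : rel T) A M p :
  bip_matching e A M -> p \in M -> [&& p.1 \in A, p.2 \notin A & e p.1 p.2].
Proof. by case/andP => /forallP H _ pM; move: (H p); rewrite pM. Qed.

Lemma bm_disj (T : finType) (e : rel T) A M p q :
  bip_matching e A M -> p \in M -> q \in M -> p != q -> disj p q.
Proof.
case/andP => _ /forallP H pM qM pq; move: (H p); rewrite pM /= => /forallP/(_ q).
by rewrite qM pq.
Qed.

Lemma bm_u2 (T : finType) (e : rel T) A M u u' v :
  bip_matching e A M -> (u, v) \in M -> (u', v) \in M -> u = u'.
Proof.
move=> H a b; case: (eqVneq (u, v) (u', v)) => [[]//|ne].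
by move: (bm_disj H a b ne); rewrite /disj eqxx !andbF.
Qed.

Lemma bm_u1 (T : finType) (e : rel T) A M u v v' :
  bip_matching e A M -> (u, v) \in M -> (u, v') \in M -> v = v'.
Proof.
move=> H a b; case: (eqVneq (u, v) (u, v')) => [[]//|ne].
by move: (bm_disj H a b ne); rewrite /disj eqxx.
Qed.

Lemma bm_sub (T : finType) (e : rel T) A A' M (X : {set T * T}) :
  bip_matching e A' M -> X \subset M -> (forall p, p \in X -> cross_edge e A p) ->
  bip_matching e A X.
Proof.
move=> H /subsetP sXM hc; apply/andP; split; first by apply/forallP => p; apply/implyP/hc.
apply/forallP => p; apply/implyP => pX; apply/forallP => q; apply/implyP => qX.
by apply/implyP => ne; apply: (bm_disj H (sXM _ pX) (sXM _ qX) ne).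
Qed.

Lemma bm_union (T : finType) (e : rel T) A (X Y : {set T * T}) :
  bip_matching e A X -> bip_matching e A Y ->
  (forall p q, p \in X -> q \in Y -> disj p q) -> bip_matching e A (X :|: Y).
Proof.
move=> HX HY hd; apply/andP; split.
  apply/forallP => p; apply/implyP; rewrite inE => /orP[] pm.
    exact: (bm_cross HX pm).
  exact: (bm_cross HY pm).
apply/forallP => p; apply/implyP => pm; apply/forallP => q; apply/implyP => qm.
apply/implyP => ne; move: pm qm; rewrite !inE => /orP[] pm /orP[] qm.
- exact: (bm_disj HX pm qm ne).
- exact: hd.
- exact/disjC/hd.
- exact: (bm_disj HY pm qm ne).
Qed.

Definition gfun (T : finType) (A B : {set T}) (M1 M2 : {set T * T}) (w : T) : T :=
  if [pick i | ((i, w) \in M1) && (i \in A :&: B)] is Some i then i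
  else if [pick o | ((w, o) \in M2) && (o \notin A :|: B)] is Some o then o else w.

Definition ystart (T : finType) (A B : {set T}) (M1 M2 : {set T * T}) (s : T) : bool :=
  [exists u, ((u, s) \in M1) && (u \in B :\: A)] ||
  [exists u, ((s, u) \in M2) && (u \in B :\: A)].

Definition mode (T : finType) (A B : {set T}) (M1 M2 : {set T * T}) (w : T) : bool :=
  [exists s, ystart A B M1 M2 s && fconnect (gfun A B M1 M2) w s].


Lemma G1 (T : finType) (e : rel T) (A B : {set T}) M1 M2 u v :
  bip_matching e (A :|: B) M1 -> (u, v) \in M1 -> u \in A :&: B ->
  gfun A B M1 M2 v = u.
Proof.
move=> H1 uv uI; rewrite /gfun; case: pickP => [i /andP[iv _]|H].
  exact: (bm_u2 H1 iv uv).
by move: (H u); rewrite uv uI.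
Qed.

Lemma G2 (T : finType) (e : rel T) (A B : {set T}) M1 M2 x y :
  bip_matching e (A :|: B) M1 -> bip_matching e (A :&: B) M2 ->
  (x, y) \in M2 -> y \notin A :|: B -> gfun A B M1 M2 x = y.
Proof.
move=> H1 H2 xy yO; rewrite /gfun.
have xI : x \in A :&: B by case/and3P: (bm_cross H2 xy).
case: pickP => [i /andP[ix _]|_].
  case/and3P: (bm_cross H1 ix) => _ /= xO _.
  by move: xI xO; rewrite !inE => /andP[-> ->].
case: pickP => [o /andP[xo _]|H]; first exact: (bm_u1 H2 xo xy).
by move: (H y); rewrite xy yO.
Qed.

Lemma nM1I (T : finType) (e : rel T) (A B : {set T}) M1 i x :
  bip_matching e (A :|: B) M1 -> (i, x) \in M1 -> x \in A :&: B -> False.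
Proof.
move=> H1 ix; case/and3P: (bm_cross H1 ix) => _ /= xO _.
by rewrite !inE; case/andP => a b; move: xO; rewrite !inE a.
Qed.

Lemma G3 (T : finType) (e : rel T) (A B : {set T}) M1 M2 s :
  bip_matching e (A :|: B) M1 -> bip_matching e (A :&: B) M2 ->
  ystart A B M1 M2 s -> gfun A B M1 M2 s = s.
Proof.
move=> H1 H2 /orP[/existsP[u /andP[us uBA]]|/existsP[u /andP[su uBA]]]; rewrite /gfun.
  case: pickP => [i /andP[iS iI]|_].
    have := bm_u2 H1 iS us => ei; move: iI uBA; rewrite ei !inE.
    by case/andP => -> _ /andP[].
  case: pickP => [o /andP[so _]|_] //.
  case/and3P: (bm_cross H2 so) => /= sI _ _.
  by case: (nM1I H1 us sI).
case: pickP => [i /andP[iS iI]|_].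
  have sI : s \in A :&: B by case/and3P: (bm_cross H2 su).
  by case: (nM1I H1 iS sI).
case: pickP => [o /andP[so oO]|_] //.
have := bm_u1 H2 so su => eo; move: oO uBA; rewrite eo !inE.
by move=> /norP[_ /negP nB] /andP[_ /nB].
Qed.

Lemma G4a (T : finType) (e : rel T) (A B : {set T}) M1 M2 u v :
  bip_matching e (A :|: B) M1 -> bip_matching e (A :&: B) M2 ->
  (u, v) \in M1 -> u \notin B ->
  gfun A B M1 M2 v = v /\ ~~ ystart A B M1 M2 v.
Proof.
move=> H1 H2 uv uB.
have vO : v \notin A :|: B by case/and3P: (bm_cross H1 uv).
have nvI : forall o, (v, o) \in M2 -> False.
  move=> o vo; case/and3P: (bm_cross H2 vo) => /= vI _ _.
  by move: vO; rewrite !inE; move: vI; rewrite !inE => /andP[-> ->].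
split.
  rewrite /gfun; case: pickP => [i /andP[iv iI]|_].
    have := bm_u2 H1 iv uv => ei; move: iI uB; rewrite ei !inE.
    by case/andP => _ ->.
  by case: pickP => [o /andP[vo _]|_] //; case: (nvI o vo).
apply/negP => /orP[/existsP[w /andP[wv wBA]]|/existsP[w /andP[vw _]]].
  have := bm_u2 H1 wv uv => ew; move: wBA uB; rewrite ew !inE.
  by case/andP => _ ->.
exact: (nvI w vw).
Qed.

Lemma G4b (T : finType) (e : rel T) (A B : {set T}) M1 M2 u y :
  bip_matching e (A :|: B) M1 -> bip_matching e (A :&: B) M2 ->
  (u, y) \in M2 -> y \in A ->
  gfun A B M1 M2 u = u /\ ~~ ystart A B M1 M2 u.
Proof.
move=> H1 H2 uy yA.
have uI : u \in A :&: B by case/and3P: (bm_cross H2 uy).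
split.
  rewrite /gfun; case: pickP => [i /andP[iu _]|_].
    by case: (nM1I H1 iu uI).
  case: pickP => [o /andP[uo oO]|_] //.
  have := bm_u1 H2 uo uy => eo; move: oO; rewrite eo !inE yA.
  by [].
apply/negP => /orP[/existsP[w /andP[wu _]]|/existsP[w /andP[uw wBA]]].
  by case: (nM1I H1 wu uI).
have := bm_u1 H2 uw uy => ew; move: wBA; rewrite ew !inE yA.
by [].
Qed.

Lemma Mode1 (T : finType) (e : rel T) (A B : {set T}) M1 M2 w :
  bip_matching e (A :|: B) M1 -> bip_matching e (A :&: B) M2 ->
  gfun A B M1 M2 w != w -> mode A B M1 M2 w = mode A B M1 M2 (gfun A B M1 M2 w).
Proof.
move=> H1 H2 ne; apply/existsP/existsP => [[s /andP[ys c]]|[s /andP[ys c]]];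
  exists s; rewrite ys /=.
  move: c; rewrite fconnect_eqVf => /orP[/eqP ews|] //.
  by move: ne; rewrite ews (G3 H1 H2 ys) eqxx.
by rewrite fconnect_eqVf c orbT.
Qed.

Lemma iter_fixed (T : Type) (f : T -> T) x n : f x = x -> iter n f x = x.
Proof. by move=> fx; elim: n => //= n ->. Qed.

Lemma Mode2 (T : finType) (A B : {set T}) M1 M2 w :
  gfun A B M1 M2 w = w -> mode A B M1 M2 w = ystart A B M1 M2 w.
Proof.
move=> fx; apply/existsP/idP => [[s /andP[ys c]]|yw]; last first.
  by exists w; rewrite yw connect0.
by move: (iter_findex c); rewrite iter_fixed // => ->.
Qed.

Lemma Mode3 (T : finType) (A B : {set T}) M1 M2 w :
  ystart A B M1 M2 w -> mode A B M1 M2 w.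
Proof. by move=> yw; apply/existsP; exists w; rewrite yw connect0. Qed.

Lemma red_disj (T : finType) (e : rel T) (A B : {set T}) M1 M2 u v x y :
  bip_matching e (A :|: B) M1 -> bip_matching e (A :&: B) M2 ->
  (u, v) \in M1 -> (u \in A) && ((u \in B) ==> ~~ mode A B M1 M2 v) ->
  (x, y) \in M2 -> (y \notin A) && ((y \notin B) ==> mode A B M1 M2 x) ->
  disj (u, v) (x, y).
Proof.
move=> H1 H2 uv /andP[uA Ru] xy /andP[yA Ry].
case/and3P: (bm_cross H1 uv) => /= _ vO _.
case/and3P: (bm_cross H2 xy) => /= xI _ _.
move: vO xI; rewrite !inE => /norP[vA vB] /andP[xA xB].
apply/and4P; split => /=.
- apply/eqP => eux; subst x.
  have gv : gfun A B M1 M2 v = u by apply: (G1 _ H1 uv); rewrite inE uA xB.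
  have ne : gfun A B M1 M2 v != v by rewrite gv; apply/eqP => E; move: vA; rewrite -E uA.
  have := Mode1 H1 H2 ne; rewrite gv.
  move: Ru; rewrite xB /= => /negbTE ->.
  case yB: (y \in B).
    have : ystart A B M1 M2 u by apply/orP; right; apply/existsP; exists y; rewrite xy !inE yA yB.
    by move/Mode3 => ->.
  by move: Ry; rewrite yB /= => ->.
- by apply/eqP => E; move: yA; rewrite -E uA.
- by apply/eqP => E; move: vA; rewrite E xA.
- apply/eqP => E; subst y.
  move: Ry; rewrite vB /= => mx.
  have gx : gfun A B M1 M2 x = v by apply: (G2 H1 H2 xy); rewrite !inE negb_or vA vB.
  have ne : gfun A B M1 M2 x != x by rewrite gx; apply/eqP => E; move: vA; rewrite E xA.
  move: (Mode1 H1 H2 ne); rewrite gx mx.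
  case uB: (u \in B).
    by move: Ru; rewrite uB /= => /negbTE ->.
  have [gv ny] := G4a H1 H2 uv (negbT uB).
  by rewrite (Mode2 gv) (negbTE ny).
Qed.

Lemma blue_disj (T : finType) (e : rel T) (A B : {set T}) M1 M2 u v x y :
  bip_matching e (A :|: B) M1 -> bip_matching e (A :&: B) M2 ->
  (u, v) \in M1 -> ~~ ((u \in A) && ((u \in B) ==> ~~ mode A B M1 M2 v)) ->
  (x, y) \in M2 -> ~~ ((y \notin A) && ((y \notin B) ==> mode A B M1 M2 x)) ->
  disj (u, v) (x, y).
Proof.
move=> H1 H2 uv Ru xy Ry.
case/and3P: (bm_cross H1 uv) => /= uAB vO _.
case/and3P: (bm_cross H2 xy) => /= xI yI _.
move: uAB vO xI yI; rewrite !inE => uAB /norP[vA vB] /andP[xA xB] yI.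
have uB : u \in B.
  by move: Ru uAB; case: (u \in A); case: (u \in B).
have yB : y \notin B.
  by move: Ry yI; case: (y \in A); case: (y \in B).
apply/and4P; split => /=.
- apply/eqP => eux; subst x.
  have mv : mode A B M1 M2 v by move: Ru; rewrite xA xB /= negbK.
  have gv : gfun A B M1 M2 v = u by apply: (G1 _ H1 uv); rewrite inE xA xB.
  have ne : gfun A B M1 M2 v != v by rewrite gv; apply/eqP => E; move: vA; rewrite -E xA.
  have := Mode1 H1 H2 ne; rewrite gv mv.
  case yA: (y \in A).
    have [gu nu] := G4b H1 H2 xy yA.
    by rewrite (Mode2 gu) (negbTE nu).
  by move: Ry; rewrite yA (negbTE yB) /= => /negbTE ->.
- by apply/eqP => E; move: yB; rewrite -E uB.
- by apply/eqP => E; move: vA; rewrite E xA.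
- apply/eqP => E; subst y.
  move: Ry; rewrite vA vB /= => /negbTE mx.
  have gx : gfun A B M1 M2 x = v by apply: (G2 H1 H2 xy); rewrite !inE negb_or vA vB.
  have ne : gfun A B M1 M2 x != x by rewrite gx; apply/eqP => E; move: vA; rewrite E xA.
  move: (Mode1 H1 H2 ne); rewrite gx mx.
  case uA: (u \in A).
    by move: Ru; rewrite uA uB /= negbK => ->.
  have : ystart A B M1 M2 v by apply/orP; left; apply/existsP; exists u; rewrite uv !inE uA uB.
  by move/Mode3 => ->.
Qed.

Lemma mm_attained (T : finType) (e : rel T) (A : {set T}) :
  exists M, bip_matching e A M /\ #|M| = mm e A.
Proof.
have P0 : bip_matching e A set0.
  by apply/andP; split; apply/forallP => p; rewrite inE.
rewrite /mm (bigmax_eq_arg set0 P0).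
case: arg_maxnP => //= M HM _; by exists M.
Qed.

Lemma mm_ge (T : finType) (e : rel T) (A : {set T}) M :
  bip_matching e A M -> #|M| <= mm e A.
Proof. by move=> H; rewrite /mm; apply: (leq_bigmax_cond M). Qed.

Lemma cardsU_disj (T : finType) (X Y : {set T}) :
  (forall p, p \in X -> p \in Y -> False) -> #|X :|: Y| = #|X| + #|Y|.
Proof.
move=> H; rewrite cardsU.
have -> : X :&: Y = set0.
  by apply/setP => p; rewrite !inE; apply/negP => /andP[a b]; case: (H p a b).
by rewrite cards0 subn0.
Qed.

Theorem theorem3 (T : finType) (e : rel T) (He : simple_graph e)
  (A B : {set T}) :
  mm e (A :|: B) + mm e (A :&: B) <= mm e A + mm e B.
Proof.
have [M1 [H1 <-]] := mm_attained e (A :|: B).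
have [M2 [H2 <-]] := mm_attained e (A :&: B).
pose md := mode A B M1 M2.
pose R1 := [set p : T * T | (p.1 \in A) && ((p.1 \in B) ==> ~~ md p.2)].
pose R2 := [set p : T * T | (p.2 \notin A) && ((p.2 \notin B) ==> md p.1)].
have rd : forall p q, p \in M1 :&: R1 -> q \in M2 :&: R2 -> disj p q.
  move=> [u v] [x y]; rewrite !inE /= => /andP[uv Ru] /andP[xy Ry].
  exact: (red_disj H1 H2 uv Ru xy Ry).
have bd : forall p q, p \in M1 :\: R1 -> q \in M2 :\: R2 -> disj p q.
  move=> [u v] [x y]; rewrite !inE /= => /andP[Ru uv] /andP[Ry xy].
  exact: (blue_disj H1 H2 uv Ru xy Ry).
have nd : forall p : T * T, disj p p -> False by move=> p; rewrite /disj eqxx.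
have Ma : bip_matching e A ((M1 :&: R1) :|: (M2 :&: R2)).
  apply: bm_union => //.
    apply: (bm_sub H1); first exact: subsetIl.
    move=> [u v]; rewrite !inE /= => /andP[uv /andP[uA _]].
    case/and3P: (bm_cross H1 uv) => /= _; rewrite !inE => /norP[vA _] euv.
    by rewrite /cross_edge /= uA vA euv.
  apply: (bm_sub H2); first exact: subsetIl.
  move=> [u v]; rewrite !inE /= => /andP[uv /andP[vA _]].
  case/and3P: (bm_cross H2 uv) => /=; rewrite !inE => /andP[uA _] _ euv.
  by rewrite /cross_edge /= uA vA euv.
have Mb : bip_matching e B ((M1 :\: R1) :|: (M2 :\: R2)).
  apply: bm_union => //.
    apply: (bm_sub H1); first exact: subsetDl.
    move=> [u v]; rewrite !inE /= => /andP[Ru uv].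
    case/and3P: (bm_cross H1 uv) => /=; rewrite !inE => uAB /norP[_ vB] euv.
    rewrite /cross_edge /= vB euv andbT.
    by move: Ru uAB; case: (u \in A); case: (u \in B).
  apply: (bm_sub H2); first exact: subsetDl.
  move=> [u v]; rewrite !inE /= => /andP[Ry uv].
  case/and3P: (bm_cross H2 uv) => /=; rewrite !inE => /andP[_ uB] vI euv.
  rewrite /cross_edge /= uB euv /=.
  by move: Ry vI; case: (v \in A); case: (v \in B).
have := leq_add (mm_ge Ma) (mm_ge Mb).
rewrite !cardsU_disj; first last.
- by move=> p a b; apply: (nd p (rd p p a b)).
- by move=> p a b; apply: (nd p (bd p p a b)).
by rewrite addnACA !cardsID.
Qed.
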